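(* (1) For any $a,b\in\mathbb C$ with $|a|^2+|b|^2=1$, $a,b\neq0$, and any unit vectors $\ket{s_A},\ket{s_B}\in\mathbb C^2$, writing $p[\Pi(h)]=(\bra{s_A}\otimes\bra{s_B})\Pi(h)(\ket{s_A}\otimes\ket{s_B})$, $p[\Pi(\mathfrak H_{1W})]+p[\Pi(\mathfrak H_{4W})]+p[\Pi(\mathfrak H_{1X})]+p[\Pi(\mathfrak H_{4X})]+p[\Pi(\mathfrak H_{1Y})]+p[\Pi(\mathfrak H_{4Y})]+p[\Pi(\mathfrak H_{2Z})]+p[\Pi(\mathfrak H_{3Z})]\le 3.$ (2) For $a=b=1/\sqrt2$ there exists a unit vector $\ket s\in\mathbb C^2\otimes\mathbb C^2$ (necessarily of Schmidt rank two) such that $\bra s\big(\Pi(\mathfrak H_{1W})+\Pi(\mathfrak H_{4W})+\Pi(\mathfrak H_{1X})+\Pi(\mathfrak H_{4X})+\Pi(\mathfrak H_{1Y})+\Pi(\mathfrak H_{4Y})+\Pi(\mathfrak H_{2Z})+\Pi(\mathfrak H_{3Z})\big)\ket s>3$.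
   Context: In $\mathbb C^2$ let $\ket0=(0,1)^T$, $\ket1=(1,0)^T$, and let $U=\begin{pmatrix}a&b\\-\bar b&\bar a\end{pmatrix}$ with $|a|^2+|b|^2=1$, $a,b\neq0$; the same $U$ acts on both factors of $\mathbb C^2\otimes\mathbb C^2$. Define one-dimensional subspaces (span of the indicated vector): $\mathfrak H_{1W}=\langle\ket1\otimes\ket1\rangle$, $\mathfrak H_{4W}=\langle\ket0\otimes\ket0\rangle$; $\mathfrak H_{1X}=\langle\ket1\otimes U\ket1\rangle$, $\mathfrak H_{4X}=\langle\ket0\otimes U\ket0\rangle$; $\mathfrak H_{1Y}=\langle U\ket1\otimes\ket1\rangle$, $\mathfrak H_{4Y}=\langle U\ket0\otimes\ket0\rangle$; $\mathfrak H_{2Z}=\langle U\ket1\otimes U\ket0\rangle$, $\mathfrak H_{3Z}=\langle U\ket0\otimes U\ket1\rangle$. $\Pi(h)$ is the orthogonal projector onto $h$. The Schmidt rank of a vector in $\mathbb C^2\otimes\mathbb C^2$ is the least $n$ such that it is a sum of $n$ product vectors. *)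

(* Defs.v *)
(* Complex numbers: an arbitrary numClosedFieldType C
   (e.g. algC); vectors of C^2 are column vectors 'cV[C]_2, C^2 (x) C^2 = 'cV[C]_4. *)
From HB Require Import structures.
From mathcomp Require Import all_boot all_order all_algebra all_field.
Set Implicit Arguments. Unset Strict Implicit. Unset Printing Implicit Defensive.
Import Order.TTheory GRing.Theory Num.Theory.
Local Open Scope ring_scope.

Section Defs.
Variable C : numClosedFieldType.

Definition adj (m n : nat) (A : 'M[C]_(m, n)) : 'M[C]_(n, m) :=
  (map_mx (fun x => x^*) A)^T.

Definition braket (n : nat) (u v : 'cV[C]_n) : C := (adj u *m v) 0 0.

Definition is_unit_vec (n : nat) (v : 'cV[C]_n) : Prop := braket v v = 1.

(* Kronecker product of vectors: (u (x) v)_(2i+j) = u_i v_j *)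
Definition kron (u v : 'cV[C]_2) : 'cV[C]_4 :=
  \col_(k < 4) (u (inord (k %/ 2)) 0 * v (inord (k %% 2)) 0).

Definition proj (n : nat) (v : 'cV[C]_n) : 'M[C]_n :=
  (braket v v)^-1 *: (v *m adj v).

Definition expect (n : nat) (s : 'cV[C]_n) (P : 'M[C]_n) : C :=
  (adj s *m P *m s) 0 0.

(* |0> = (0,1)^T, |1> = (1,0)^T *)
Definition ket0 : 'cV[C]_2 := \col_(i < 2) (if i == 0 then 0 else 1).
Definition ket1 : 'cV[C]_2 := \col_(i < 2) (if i == 0 then 1 else 0).

Definition Umat (a b : C) : 'M[C]_2 :=
  \matrix_(i < 2, j < 2)
    (if i == 0 then (if j == 0 then a else b) else (if j == 0 then - b^* else a^*)).

Definition h1W : 'cV[C]_4 := kron ket1 ket1.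
Definition h4W : 'cV[C]_4 := kron ket0 ket0.
Definition h1X (a b : C) : 'cV[C]_4 := kron ket1 (Umat a b *m ket1).
Definition h4X (a b : C) : 'cV[C]_4 := kron ket0 (Umat a b *m ket0).
Definition h1Y (a b : C) : 'cV[C]_4 := kron (Umat a b *m ket1) ket1.
Definition h4Y (a b : C) : 'cV[C]_4 := kron (Umat a b *m ket0) ket0.
Definition h2Z (a b : C) : 'cV[C]_4 := kron (Umat a b *m ket1) (Umat a b *m ket0).
Definition h3Z (a b : C) : 'cV[C]_4 := kron (Umat a b *m ket0) (Umat a b *m ket1).

Definition Pi_total (a b : C) : 'M[C]_4 :=
  proj h1W + proj h4W + proj (h1X a b) + proj (h4X a b)
  + proj (h1Y a b) + proj (h4Y a b) + proj (h2Z a b) + proj (h3Z a b).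

Definition sum_of_products (s : 'cV[C]_4) (n : nat) : Prop :=
  exists (us vs : 'I_n -> 'cV[C]_2), s = \sum_(i < n) kron (us i) (vs i).

Definition schmidt_rank_is (s : 'cV[C]_4) (r : nat) : Prop :=
  sum_of_products s r /\ forall n, sum_of_products s n -> (r <= n)%N.

End Defs.

(* Main.v *)
Require Import Defs.
From HB Require Import structures.
From mathcomp Require Import all_boot all_order all_algebra all_field.
From mathcomp Require Import ring lra.
Import Order.TTheory GRing.Theory Num.Theory.
Local Open Scope ring_scope.

Lemma chsh (R : numDomainType) (t r t' r' : R) :
  0 <= t -> 0 <= 1 - t -> 0 <= r -> 0 <= 1 - r ->
  0 <= t' -> 0 <= 1 - t' -> 0 <= r' -> 0 <= 1 - r' ->
  t * t' + (1 - t) * (1 - t') + t * r' + (1 - t) * (1 - r')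
  + r * t' + (1 - r) * (1 - t') + r * (1 - r') + (1 - r) * r' <= 3.
Proof.
move=> h1 h2 h3 h4 h5 h6 h7 h8.
rewrite -subr_ge0.
have -> : 3 - (t * t' + (1 - t) * (1 - t') + t * r' + (1 - t) * (1 - r')
  + r * t' + (1 - r) * (1 - t') + r * (1 - r') + (1 - r) * r') =
  2 * (t * r * (1 - t') * r' + t * r * (1 - t') * (1 - r')
     + t * (1 - r) * t' * (1 - r') + t * (1 - r) * (1 - t') * (1 - r')
     + (1 - t) * r * t' * r' + (1 - t) * r * (1 - t') * r'
     + (1 - t) * (1 - r) * t' * r' + (1 - t) * (1 - r) * t' * (1 - r')) by ring.
by rewrite mulr_ge0 // !addr_ge0 // !mulr_ge0.
Qed.

Lemma chsh2 (R : numDomainType) (t T r Rr t' T' r' R' : R) :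
  t + T = 1 -> r + Rr = 1 -> t' + T' = 1 -> r' + R' = 1 ->
  0 <= t -> 0 <= T -> 0 <= r -> 0 <= Rr ->
  0 <= t' -> 0 <= T' -> 0 <= r' -> 0 <= R' ->
  t * t' + T * T' + t * r' + T * R' + r * t' + Rr * T' + r * R' + Rr * r' <= 3.
Proof.
move=> e1 e2 e3 e4 h1 h2 h3 h4 h5 h6 h7 h8.
have -> : T = 1 - t by rewrite -e1; ring.
have -> : Rr = 1 - r by rewrite -e2; ring.
have -> : T' = 1 - t' by rewrite -e3; ring.
have -> : R' = 1 - r' by rewrite -e4; ring.
apply: chsh => //.
- by rewrite -e1 addrAC subrr add0r.
- by rewrite -e2 addrAC subrr add0r.
- by rewrite -e3 addrAC subrr add0r.
- by rewrite -e4 addrAC subrr add0r.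
Qed.

Section L.
Variable C : numClosedFieldType.

Lemma braketE n (u v : 'cV[C]_n) : braket u v = \sum_i (u i 0)^* * v i 0.
Proof. by rewrite /braket /adj mxE; apply: eq_bigr => i _; rewrite !mxE. Qed.

Lemma braket2 (u v : 'cV[C]_2) : braket u v = (u 0 0)^* * v 0 0 + (u 1 0)^* * v 1 0.
Proof.
rewrite braketE big_ord_recr big_ord1 /=.
have -> : widen_ord (leqnSn 1) ord0 = 0 :> 'I_2 by apply/val_inj.
by have -> : (ord_max : 'I_2) = 1 by apply/val_inj.
Qed.

Lemma braketDr n (u v w : 'cV[C]_n) : braket u (v + w) = braket u v + braket u w.
Proof. by rewrite !braketE -big_split; apply: eq_bigr => i _; rewrite !mxE mulrDr. Qed.

Lemma braketDl n (u v w : 'cV[C]_n) : braket (v + w) u = braket v u + braket w u.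
Proof. by rewrite !braketE -big_split; apply: eq_bigr => i _; rewrite !mxE rmorphD mulrDl. Qed.

Lemma braketC n (u v : 'cV[C]_n) : braket v u = (braket u v)^*.
Proof. rewrite !braketE rmorph_sum; apply: eq_bigr => i _; by rewrite rmorphM /= conjCK mulrC. Qed.

Lemma braket_kron (u v x y : 'cV[C]_2) :
  braket (kron u v) (kron x y) = braket u x * braket v y.
Proof.
rewrite braketE !braket2 !big_ord_recr big_ord0 /= !mxE.
have e0 : (inord 0 : 'I_2) = 0 by apply/val_inj; rewrite /= inordK.
have e1 : (inord 1 : 'I_2) = 1 by apply/val_inj; rewrite /= inordK.
rewrite /= ?e0 ?e1 !rmorphM.
ring.
Qed.

Lemma expect_proj n (s h : 'cV[C]_n) :
  expect s (proj h) = (braket h h)^-1 * (braket s h * braket h s).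
Proof.
rewrite /expect /proj -scalemxAr -scalemxAl mxE; congr (_ * _).
by rewrite !mulmxA -(mulmxA _ (adj h)) mxE big_ord1.
Qed.


Lemma ket1E : (ket1 C 0 0 = 1) * (ket1 C 1 0 = 0).
Proof. by rewrite !mxE. Qed.
Lemma ket0E : (ket0 C 0 0 = 0) * (ket0 C 1 0 = 1).
Proof. by rewrite !mxE. Qed.

Lemma mul2E (M : 'M[C]_2) (x : 'cV[C]_2) i : (M *m x) i 0 = M i 0 * x 0 0 + M i 1 * x 1 0.
Proof.
rewrite mxE big_ord_recr big_ord1 /=.
have -> : widen_ord (leqnSn 1) ord0 = 0 :> 'I_2 by apply/val_inj.
by have -> : (ord_max : 'I_2) = 1 by apply/val_inj.
Qed.

Lemma uE (a b : C) : ((Umat a b *m ket1 C) 0 0 = a) * ((Umat a b *m ket1 C) 1 0 = - b^*).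
Proof. by rewrite !mul2E !mxE /=; split; ring. Qed.
Lemma vE (a b : C) : ((Umat a b *m ket0 C) 0 0 = b) * ((Umat a b *m ket0 C) 1 0 = a^*).
Proof. by rewrite !mul2E !mxE /=; split; ring. Qed.

Lemma p_prod (x y f g : 'cV[C]_2) : braket f f = 1 -> braket g g = 1 ->
  expect (kron x y) (proj (kron f g)) = `|braket f x| ^+ 2 * `|braket g y| ^+ 2.
Proof.
move=> hf hg; rewrite expect_proj !braket_kron hf hg mulr1 invr1 mul1r.
rewrite (@braketC _ f x) (@braketC _ g y) !normCK; ring.
Qed.

Lemma unit_u (a b : C) : a * a^* + b * b^* = 1 ->
  braket (Umat a b *m ket1 C) (Umat a b *m ket1 C) = 1.
Proof. move=> h; rewrite braket2 !uE rmorphN /= conjCK -h; ring. Qed.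
Lemma unit_v (a b : C) : a * a^* + b * b^* = 1 ->
  braket (Umat a b *m ket0 C) (Umat a b *m ket0 C) = 1.
Proof. move=> h; rewrite braket2 !vE conjCK -h; ring. Qed.
Lemma unit_k1 : braket (ket1 C) (ket1 C) = 1.
Proof. by rewrite braket2 !ket1E rmorph0 rmorph1 mul0r addr0 mul1r. Qed.
Lemma unit_k0 : braket (ket0 C) (ket0 C) = 1.
Proof. by rewrite braket2 !ket0E rmorph0 rmorph1 mul0r add0r mul1r. Qed.

Lemma sum_k (x : 'cV[C]_2) : braket x x = 1 ->
  `|braket (ket1 C) x| ^+ 2 + `|braket (ket0 C) x| ^+ 2 = 1.
Proof.
rewrite !braket2 !normCK !ket1E !ket0E rmorph0 rmorph1 => h.
transitivity ((x 0 0)^* * x 0 0 + (x 1 0)^* * x 1 0) => //. rewrite !rmorphD !rmorphM /= ?rmorph0 ?conjCK; ring.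
Qed.

Lemma sum_uv (a b : C) (x : 'cV[C]_2) : a * a^* + b * b^* = 1 -> braket x x = 1 ->
  `|braket (Umat a b *m ket1 C) x| ^+ 2 + `|braket (Umat a b *m ket0 C) x| ^+ 2 = 1.
Proof.
rewrite !braket2 !normCK !uE !vE => hab h.
transitivity ((a * a^* + b * b^*) * ((x 0 0)^* * x 0 0 + (x 1 0)^* * x 1 0)); last first.
  by rewrite hab h mul1r.
rewrite !rmorphD !rmorphM !rmorphN /= !conjCK; ring.
Qed.

End L.

Theorem part1 (C : numClosedFieldType) :
  (forall (a b : C) (sA sB : 'cV[C]_2),
      `|a| ^+ 2 + `|b| ^+ 2 = 1 -> a != 0 -> b != 0 ->
      is_unit_vec sA -> is_unit_vec sB ->
      let p := fun h : 'cV[C]_4 => expect (kron sA sB) (proj h) in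
      p (h1W C) + p (h4W C) + p (h1X a b) + p (h4X a b)
      + p (h1Y a b) + p (h4Y a b) + p (h2Z a b) + p (h3Z a b) <= 3).
Proof.
move=> a b sA sB Hn _ _ HA HB; cbv zeta.
have hab : a * a^* + b * b^* = 1 by rewrite -!normCK.
rewrite /h1W /h4W /h1X /h4X /h1Y /h4Y /h2Z /h3Z.
rewrite !p_prod ?unit_k1 ?unit_k0 ?(unit_u hab) ?(unit_v hab) //.
apply: chsh2; rewrite ?sum_k ?sum_uv //; try exact: exprn_ge0.
all: by [apply: unit_u | apply: unit_v].
Qed.
Section P2.
Variable C : numClosedFieldType.

Definition w1 : 'cV[C]_2 := \col_(i < 2) (if i == 0 then 2 / 3 else - (1 / 3)).
Definition w2 : 'cV[C]_2 := \col_(i < 2) (if i == 0 then 0 else - (2 / 3)).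
Definition sv : 'cV[C]_4 := kron (ket1 C) w1 + kron (ket0 C) w2.

Lemma w1E : (w1 0 0 = 2 / 3) * (w1 1 0 = - (1 / 3)).
Proof. by rewrite !mxE. Qed.
Lemma w2E : (w2 0 0 = 0) * (w2 1 0 = - (2 / 3)).
Proof. by rewrite !mxE. Qed.

Lemma bk (f g : 'cV[C]_2) : braket (kron f g) sv =
  braket f (ket1 C) * braket g w1 + braket f (ket0 C) * braket g w2.
Proof. by rewrite /sv braketDr !braket_kron. Qed.

Lemma nz3 : (3 : C) != 0. Proof. by rewrite pnatr_eq0. Qed.
Lemma nz2 : (2 : C) != 0. Proof. by rewrite pnatr_eq0. Qed.

Lemma sv_unit : braket sv sv = 1.
Proof.
rewrite {1}/sv braketDl !bk !braket2 !ket1E !ket0E !w1E !w2E.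
rewrite !(rmorphM, rmorphD, rmorphN, fmorphV, conjC_nat, rmorph0, rmorph1).
by field.
Qed.

Lemma sv_rank : schmidt_rank_is sv 2.
Proof.
split.
  exists (fun i => if i == 0 then ket1 C else ket0 C).
  exists (fun i => if i == 0 then w1 else w2).
  by rewrite big_ord_recr big_ord1 /=.
move=> n [us [vs e]]; case: n us vs e => [|[|n]] // us vs e.
  rewrite big_ord0 in e; have := sv_unit; rewrite e braketE.
  rewrite big1 => [/eqP|i _]; first by rewrite eq_sym oner_eq0.
  by rewrite mxE mulr0.
rewrite big_ord1 in e.
have c00 := bk (ket1 C) (ket1 C); have c11 := bk (ket0 C) (ket0 C).
have c01 := bk (ket1 C) (ket0 C); have c10 := bk (ket0 C) (ket1 C).
rewrite e !braket_kron in c00 c11 c01 c10.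
have : (braket (ket1 C) (us 0) * braket (ket1 C) (vs 0)) *
       (braket (ket0 C) (us 0) * braket (ket0 C) (vs 0)) =
       (braket (ket1 C) (us 0) * braket (ket0 C) (vs 0)) *
       (braket (ket0 C) (us 0) * braket (ket1 C) (vs 0)) by ring.
rewrite c00 c11 c01 c10 !braket2 !ket1E !ket0E !w1E !w2E.
rewrite !(rmorph0, rmorph1) => /eqP.
rewrite !(mul1r, mul0r, mulr0, mulr1, addr0, add0r).
by rewrite mulrN oppr_eq0 !mulf_eq0 !invr_eq0 !pnatr_eq0.
Qed.

Lemma expectD n (s : 'cV[C]_n) P Q : expect s (P + Q) = expect s P + expect s Q.
Proof. by rewrite /expect mulmxDr mulmxDl mxE. Qed.

Lemma part2_val (a : C) : a^* = a -> a * a = 2^-1 -> 3 < expect sv (Pi_total a a).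
Proof.
move=> ha hA.
have hab : a * a^* + a * a^* = 1 by rewrite ha hA; by field.
rewrite /Pi_total !expectD !expect_proj /h1W /h4W /h1X /h4X /h1Y /h4Y /h2Z /h3Z.
rewrite !braket_kron ?unit_k1 ?unit_k0 (@unit_u _ a a hab) (@unit_v _ a a hab) !(mulr1, mul1r, invr1).
rewrite !(@braketC _ _ _ sv) !bk !braket2 !ket1E !ket0E !w1E !w2E !uE !vE.
rewrite !(rmorphM, rmorphD, rmorphN, fmorphV, conjC_nat, rmorph0, rmorph1) /= ?conjCK ha.
set X := (X in 3 < X).
have -> : X = 8 / 9 + (a * a) * (26 / 9) + (a * a) ^+ 2 * (34 / 9) by rewrite /X; field.
rewrite hA.
have -> : 8 / 9 + (2^-1 : C) * (26 / 9) + 2^-1 ^+ 2 * (34 / 9) = 59 / 18 by field.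
by rewrite ltr_pdivlMr ?ltr0n // -natrM ltr_nat.
Qed.
End P2.

Theorem mainTheorem8 (C : numClosedFieldType) :
  (forall (a b : C) (sA sB : 'cV[C]_2),
      `|a| ^+ 2 + `|b| ^+ 2 = 1 -> a != 0 -> b != 0 ->
      is_unit_vec sA -> is_unit_vec sB ->
      let p := fun h : 'cV[C]_4 => expect (kron sA sB) (proj h) in
      p (h1W C) + p (h4W C) + p (h1X a b) + p (h4X a b)
      + p (h1Y a b) + p (h4Y a b) + p (h2Z a b) + p (h3Z a b) <= 3)
  /\
  (let a : C := (sqrtC 2)^-1 in
   exists s : 'cV[C]_4,
     is_unit_vec s /\ schmidt_rank_is s 2 /\ 3 < expect s (Pi_total a a)).
Proof.
split; first exact: part1.
cbv zeta; exists (sv C); split; first exact: sv_unit.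
split; first exact: sv_rank.
apply: part2_val.
  by apply: geC0_conj; rewrite invr_ge0 sqrtC_ge0 ler0n.
by rewrite -invfM -expr2 sqrtCK.
Qed.
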